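(* Let $(M_1,M_2)$ be a state of a duplex network, fix $\ell\in\{1,2\}$, and let $\mathcal P=\big((v_0\xrightarrow{\ell_1}v_1),\dots,(v_{k-1}\xrightarrow{\ell_k}v_k)\big)$ be a CLAP (with chosen witness paths) of minimum length among all CLAPs with endpoints $(v_0,v_k)$. If there exist $i<j$ with $\ell_i=\ell_j=\ell$ such that the witness alternating paths of the $i$-th and $j$-th segments share at least one edge, then there exists another CLAP between $v_0$ and $v_k$ with strictly fewer segments.
   Context: A duplex network consists of directed graphs $G_1=(V,E_1)$, $G_2=(V,E_2)$ on a common finite node set $V$. For $\ell\in\{1,2\}$, $\mathcal B_\ell$ is the bipartite graph with vertex classes $V^+=\{v^+\}$, $V^-=\{v^-\}$ and an edge $\{u^+,v^-\}$ for each $(u,v)\in E_\ell$. A state is a pair of matchings $M_\ell$ in $\mathcal B_\ell$; $D_\ell=\{v\in V: v^-\text{ uncovered by }M_\ell\}$, $\mathrm{DD}_1=D_1\setminus D_2$, $\mathrm{DD}_2=D_2\setminus D_1$. An admissible segment $(u\xrightarrow{\ell}v)$ requires an $M_\ell$-alternating path (simple path in $\mathcal B_\ell$ alternating between $M_\ell$ and non-$M_\ell$ edges) between $u^-$ and $v^-$, called a witness path, and: for $\ell=1$, $u\in D_1$, $v\notin D_1$; for $\ell=2$, $u\notin D_2$, $v\in D_2$. A CLAP is a sequence of admissible segments $v_0\xrightarrow{\ell_1}v_1\cdots\xrightarrow{\ell_k}v_k$ with $v_0\in\mathrm{DD}_1$, $v_k\in\mathrm{DD}_2$, $\ell_{i+1}\ne\ell_i$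 for all $i$, and $v_0,\dots,v_k$ pairwise distinct; its length is the number $k$ of segments. *)

(* Defs.v *)
From mathcomp Require Import all_boot.
Set Implicit Arguments. Unset Strict Implicit. Unset Printing Implicit Defensive.

Inductive layer := L1 | L2.
Definition layer_eqb (a b : layer) : bool :=
  match a, b with L1, L1 | L2, L2 => true | _, _ => false end.

(* An edge {u^+, v^-} of B_l is encoded
   by the pair (u, v) : V * V; a matching is a set of such pairs. *)
Record state (V : finType) := State {
  E1 : rel V; E2 : rel V; M1 : {set V * V}; M2 : {set V * V} }.

Section Duplex.
Variable V : finType.

Definition is_matching (Er : rel V) (Mr : {set V * V}) : Prop :=
  [/\ (forall e, e \in Mr -> Er e.1 e.2),
      (forall e f, e \in Mr -> f \in Mr -> e.1 = f.1 -> e = f) &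
      (forall e f, e \in Mr -> f \in Mr -> e.2 = f.2 -> e = f)].

Variable S : state V.

Definition Ed (l : layer) : rel V := match l with L1 => E1 S | L2 => E2 S end.
Definition Md (l : layer) : {set V * V} := match l with L1 => M1 S | L2 => M2 S end.

(* D_l : nodes v whose copy v^- is not covered by M_l *)
Definition Dset (l : layer) : {set V} := [set v | ~~ [exists u, (u, v) \in Md l]].
Definition DD1 : {set V} := Dset L1 :\: Dset L2.
Definition DD2 : {set V} := Dset L2 :\: Dset L1.

(* vertices of B_l : inl v = v^+, inr v = v^- *)
Definition BV := (V + V)%type.

Definition bedge (x y : BV) : option (V * V) :=
  match x, y with
  | inl a, inr b => Some (a, b)
  | inr b, inl a => Some (a, b)
  | _, _ => None
  end.

Definition bstep (l : layer) (x y : BV) : bool :=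
  if bedge x y is Some e then Ed l e.1 e.2 else false.

Definition bedges (x : BV) (s : seq BV) : seq (V * V) := pmap id (pairmap bedge x s).

Definition alt_path (l : layer) (x : BV) (s : seq BV) : Prop :=
  [/\ uniq (x :: s), path (bstep l) x s &
      sorted (fun e f => (e \in Md l) != (f \in Md l)) (bedges x s)].

Definition witness (l : layer) (u v : V) (w : BV * seq BV) : Prop :=
  [/\ w.1 = inr u, last w.1 w.2 = inr v & alt_path l w.1 w.2].

Definition seg_cond (l : layer) (u v : V) : bool :=
  match l with
  | L1 => (u \in Dset L1) && (v \notin Dset L1)
  | L2 => (u \notin Dset L2) && (v \in Dset L2)
  end.

Definition admissible (l : layer) (u v : V) : Prop :=
  seg_cond l u v /\ exists w, witness l u v w.

(* A CLAP  v0 -l1-> v1 ... -lk-> vk  is encoded by v0 and the list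
   segs = [:: (l1, v1); ...; (lk, vk)]. *)
Definition clap_nodes (v0 : V) (segs : seq (layer * V)) : seq V := v0 :: map snd segs.
Definition clap_layers (segs : seq (layer * V)) : seq layer := map fst segs.
Definition clap_end (v0 : V) (segs : seq (layer * V)) : V := last v0 (map snd segs).

Definition is_CLAP (v0 : V) (segs : seq (layer * V)) : Prop :=
  [/\ v0 \in DD1, clap_end v0 segs \in DD2,
      uniq (clap_nodes v0 segs),
      sorted (fun a b => ~~ layer_eqb a b) (clap_layers segs) &
      forall i, i < size segs ->
        admissible (nth L1 (clap_layers segs) i)
                   (nth v0 (clap_nodes v0 segs) i)
                   (nth v0 (clap_nodes v0 segs) i.+1)].

(* ws is a choice of witness paths for the segments of the CLAP (0-indexed) *)
Definition clap_witnesses (v0 : V) (segs : seq (layer * V))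
    (ws : seq (BV * seq BV)) : Prop :=
  size ws = size segs /\
  forall i, i < size segs ->
    witness (nth L1 (clap_layers segs) i)
            (nth v0 (clap_nodes v0 segs) i)
            (nth v0 (clap_nodes v0 segs) i.+1)
            (nth (inr v0, [::]) ws i).

End Duplex.

(* Main.v *)
Require Import Defs.
From mathcomp Require Import all_boot zify.
Set Implicit Arguments. Unset Strict Implicit. Unset Printing Implicit Defensive.

Section Aux.
Variable V : finType.
Variable S : state V.
Variable l : layer.

Definition isl (x : BV V) : bool := if x is inl _ then true else false.
Definition flag (x y : BV V) : bool := if bedge x y is Some e then e \in Md S l else false.
Definition gsc (c : bool) (x y : BV V) : bool := bstep S l x y && (flag x y == isl x (+) c).
Definition altr (e f : V * V) : bool := (e \in Md S l) != (f \in Md S l).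

Lemma bstep_side x y : bstep S l x y -> isl y = ~~ isl x.
Proof. by case: x => a; case: y => b. Qed.

Lemma bedges_cons (x y : BV V) (s : seq (BV V)) : bedges x (y :: s) =
  if bedge x y is Some e then e :: bedges y s else bedges y s.
Proof. by rewrite /bedges /=; case: bedge. Qed.

Lemma alt_gsc c x s : path (bstep S l) x s -> sorted altr (bedges x s) ->
  (forall y s', s = y :: s' -> flag x y = isl x (+) c) -> path (gsc c) x s.
Proof.
elim: s x => [//|y s IH] x /= /andP[bxy ps] srt hf.
have fxy := hf y s erefl.
rewrite /gsc bxy fxy eqxx /=.
move: srt; rewrite bedges_cons; case E: (bedge x y) => [e|]; last by move: bxy; rewrite /bstep E.
move=> srt.
apply: IH => //; first exact: path_sorted srt.
move=> z s' Es; subst s.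
move: srt; rewrite bedges_cons; case E2: (bedge y z) => [e'|]; last by move: ps => /andP[]; rewrite /bstep E2.
rewrite /= => /andP[ee _].
move: fxy; rewrite /flag E E2 (bstep_side bxy) => fxy.
move: ee; rewrite /altr fxy.
by clear hf fxy; case: (e' \in _); case: (isl x); case: (c).
Qed.

Lemma gsc_alt_path c s x e : path (gsc c) x s -> (e \in Md S l) = ~~ (isl x (+) c) ->
  path altr e (bedges x s).
Proof.
elim: s x e => [|y s IH] x e /=; first by rewrite /bedges.
move=> /andP[/andP[bxy /eqP fxy] ps] he.
rewrite bedges_cons. case E: (bedge x y) => [e'|]; last by move: bxy; rewrite /bstep E.
rewrite /=; apply/andP; split.
- move: fxy; rewrite /flag E /altr he => ->. by case: (isl x); case: (c).
- apply: IH => //. move: fxy; rewrite /flag E (bstep_side bxy) => ->. by case: (isl x); case: (c).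
Qed.

Lemma gsc_alt c x s : path (gsc c) x s -> path (bstep S l) x s /\ sorted altr (bedges x s).
Proof.
move=> p; split.
- have sr : subrel (gsc c) (bstep S l) by move=> a b /andP[].
  exact: (sub_path sr p).
- case: s p => [|y s] /=; first by rewrite /bedges.
  move=> /andP[/andP[bxy /eqP fxy] ps].
  rewrite bedges_cons; case E: (bedge x y) => [e'|]; last by move: bxy; rewrite /bstep E.
  rewrite /=; apply: (gsc_alt_path ps). move: fxy; rewrite /flag E (bstep_side bxy) => ->.
  by case: (isl x); case: (c).
Qed.

Lemma witness_gsc u v w : witness S l u v w -> seg_cond S l u v -> u != v ->
  path (gsc (layer_eqb l L2)) w.1 w.2.
Proof.
case: w => x s [/= -> hl [_ ps srt]] sc neq.
case: s hl ps srt => [|y s] hl ps srt.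
  by move: hl => /= [E]; rewrite E eqxx in neq.
suff key : flag (inr u) y (+) isl (inr u) = (layer_eqb l L2).
  rewrite -key; apply: alt_gsc => // y' s' [<- _].
  by case: (flag _ _); case: (isl _).
have [El|El] : l = L1 \/ l = L2 by case: l; auto.
- move: sc; rewrite El /= inE => /andP[/existsPn hu _].
  move: ps => /= /andP[bxy _].
  case: y bxy {hl srt} => [a|a] bxy; last by [].
  by rewrite /flag /= El (negbTE (hu a)).
- set c0 := flag (inr u) y (+) isl (inr u).
  have pg : path (gsc c0) (inr u) (y :: s).
    apply: alt_gsc => // y' s' [<- _]. rewrite /c0.
    by case: (flag _ _); case: (isl _).
  move: sc; rewrite El /= !inE => /andP[_ /existsPn hv].
  move: pg hl. case/lastP E: (y :: s) => [//|s1 z].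
  rewrite rcons_path last_rcons => /andP[_ ] /andP[b /eqP f] ez.
  subst z.
  move: b f; case: (last (inr u) s1) => [a|a] b; last by [].
  rewrite /flag /= El (negbTE (hv a)) /=.
  by case: c0.
Qed.

Lemma bedges_mem (e : V * V) (x : BV V) (s : seq (BV V)) : e \in bedges x s -> inl e.1 \in x :: s.
Proof.
elim: s x => [|y s IH] x; first by rewrite /bedges.
rewrite bedges_cons.
case E: (bedge x y) => [f|].
- rewrite inE => /orP[/eqP ->| /IH]; last by rewrite !inE => ->; rewrite !orbT.
  move: E; case: x => a; case: y => b //= [<-] /=; by rewrite !inE eqxx ?orbT.
- move/IH. rewrite !inE => ->; by rewrite orbT.
Qed.

Lemma split_first (T : eqType) (q : seq T) (s : seq T) : has (mem q) s ->
  exists s1 z s2, [/\ s = s1 ++ z :: s2, z \in q & all (fun a => a \notin q) s1].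
Proof.
elim: s => [//|a s IH] /=. case Ha: (a \in q) => /=.
- by exists [::], a, s.
- move/IH => [s1 [z [s2 [-> zq alls]]]]. exists (a :: s1), z, s2. by rewrite /= Ha alls.
Qed.

Definition fpath (r : rel (BV V)) (p : seq (BV V)) := if p is h :: tl then path r h tl else true.

Lemma fpath_suffix r q1 z q2 : fpath r (q1 ++ z :: q2) -> path r z q2.
Proof.
case: q1 => [//|h q1] /=. rewrite cat_path => /andP[_ /= /andP[_ ->]] //.
Qed.

Lemma combine c u v x s b t :
  x = inr u -> uniq (x :: s) -> path (gsc c) x s ->
  uniq (b :: t) -> path (gsc c) b t -> last b t = inr v ->
  has (mem (b :: t)) (x :: s) ->
  exists w : BV V * seq (BV V),
    [/\ w.1 = inr u, last w.1 w.2 = inr v, uniq (w.1 :: w.2) & path (gsc c) w.1 w.2].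
Proof.
move=> -> ux px ub pb lb /split_first [s1 [z [s2 [E zq alls]]]].
have pb' : fpath (gsc c) (b :: t) := pb.
have lb' : last (inr v) (b :: t) = inr v := lb.
case/splitPr: zq alls ub pb' lb' => q1 q2 alls ub2 pb2 lb2.
have pz := fpath_suffix pb2.
have uz : uniq (z :: q2) by move: ub2; rewrite cat_uniq => /and3P[_ _ ->].
have lz : last z q2 = inr v by move: lb2; rewrite last_cat.
case: s1 E alls => [|h s1] /= E alls.
- case: E => Ez _. rewrite Ez. by exists (z, q2).
- case: E => Eh Es; subst h s.
  exists (inr u, s1 ++ z :: q2); split => //.
  + by rewrite /= last_cat.
  + change (uniq ((inr u :: s1) ++ z :: q2)); rewrite cat_uniq uz andbT.
    move: ux; rewrite -cat_cons cat_uniq => /andP[-> _].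
    have alls2 : all (fun a => a \notin q1 ++ z :: q2) (inr u :: s1) := alls.
    rewrite has_sym; apply/hasPn => a /(allP alls2).
    by rewrite mem_cat negb_or => /andP[_].
  + move: px; rewrite /= !cat_path /= => /and3P[-> -> _]. by rewrite pz.
Qed.

End Aux.

Theorem mainTheorem4 (V : finType) (S : state V)
    (hM1 : is_matching (E1 S) (M1 S)) (hM2 : is_matching (E2 S) (M2 S))
    (l : layer) (v0 : V) (segs : seq (layer * V)) (ws : seq (BV V * seq (BV V))) :
  is_CLAP S v0 segs ->
  clap_witnesses S v0 segs ws ->
  (forall segs', is_CLAP S v0 segs' -> clap_end v0 segs' = clap_end v0 segs ->
     size segs <= size segs') ->
  forall i j, i < j -> j < size segs ->
  nth L1 (clap_layers segs) i = l -> nth L1 (clap_layers segs) j = l ->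
  (exists e, (e \in bedges (nth (inr v0, [::]) ws i).1 (nth (inr v0, [::]) ws i).2) &&
             (e \in bedges (nth (inr v0, [::]) ws j).1 (nth (inr v0, [::]) ws j).2)) ->
  exists segs', [/\ is_CLAP S v0 segs', clap_end v0 segs' = clap_end v0 segs &
                    size segs' < size segs].
Proof.
move=> [h0 hend huniq hsort hadm] [hws hw] _ i j ij jsz Li Lj [e /andP[ei ej]].
have isz : i < size segs := ltn_trans ij jsz.
pose segs' := take i segs ++ drop j segs.
have hsz : size segs' = i + (size segs - j).
  by rewrite /segs' size_cat size_take isz size_drop.
have nthL : forall t, nth L1 (clap_layers segs') t =
    nth L1 (clap_layers segs) (if t < i then t else t + (j - i)).
  move=> t; rewrite /clap_layers /segs' map_cat map_take map_drop nth_cat size_take size_map isz.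
  case: ifP => ti; first by rewrite nth_take.
  rewrite nth_drop; congr nth; lia.
have nthN : forall t, nth v0 (clap_nodes v0 segs') t =
    nth v0 (clap_nodes v0 segs) (if t <= i then t else t + (j - i)).
  case=> [|t] //=.
  rewrite /segs' map_cat map_take map_drop nth_cat size_take size_map isz.
  case: ifP => ti; first by rewrite nth_take.
  rewrite addSn /= nth_drop; congr nth; lia.
have hE : clap_end v0 segs' = clap_end v0 segs.
  rewrite /clap_end /segs' map_cat map_drop last_cat.
  rewrite -{2}(cat_take_drop j (map snd segs)) last_cat.
  have : 0 < size (drop j (map snd segs)) by rewrite size_drop size_map subn_gt0.
  by case: (drop j (map snd segs)).
exists segs'; split => //; last by rewrite hsz; lia.
split => //; first by rewrite hE.
-
  apply: subseq_uniq huniq.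
  rewrite /clap_nodes /segs' map_cat map_take map_drop /=.
  rewrite eqxx.
  rewrite -[X in subseq _ X](cat_take_drop i (map snd segs)).
  apply: cat_subseq => //.
  have -> : j = (j - i) + i by lia.
  by rewrite -drop_drop drop_subseq.
-
  move/(sortedP L1): hsort => hs.
  apply/(sortedP L1) => t; rewrite size_map hsz => ht.
  rewrite !nthL.
  have hs' : forall k, k.+1 < size segs -> ~~ layer_eqb (nth L1 (clap_layers segs) k) (nth L1 (clap_layers segs) k.+1).
    by move=> k hk; apply: hs; rewrite size_map.
  case: ifP => t1; case: ifP => t2.
  + apply: hs'; lia.
  + have -> : t.+1 + (j - i) = j by lia.
    rewrite Lj -Li. have -> : i = t.+1 by lia. apply: hs'; lia.
  + lia.
  + rewrite addSn; apply: hs'; lia.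
-
  move=> t; rewrite hsz => ht.
  rewrite nthL !nthN.
  case: (ltngtP t i) => ti.
  + apply: hadm; lia.
  + rewrite addSn; apply: hadm; lia.
  + subst t.
    have -> : i + (j - i) = j by lia.
    have -> : i.+1 + (j - i) = j.+1 by lia.
    rewrite Lj.
    have [sci _] := hadm i isz. have [scj _] := hadm j jsz.
    rewrite Li in sci; rewrite Lj in scj.
    have hszN : size (clap_nodes v0 segs) = (size segs).+1 by rewrite /clap_nodes /= size_map.
    have neq : forall a b, a < b -> b <= size segs ->
        nth v0 (clap_nodes v0 segs) a != nth v0 (clap_nodes v0 segs) b.
      move=> a b ab bs; rewrite nth_uniq ?hszN //; lia.
    split.
      move: sci scj; case: (l) => /= /andP[a _] /andP[_ b]; by rewrite a b.
    have wi := hw i isz; rewrite Li in wi.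
    have wj := hw j jsz; rewrite Lj in wj.
    have pi := witness_gsc wi sci (neq i i.+1 (ltnSn i) isz).
    have pj := witness_gsc wj scj (neq j j.+1 (ltnSn j) jsz).
    move: wi wj pi pj ei ej.
    case: (nth _ ws i) => x s. case: (nth _ ws j) => b t.
    move=> [/= hx _ [ux _ _]] [/= hb hl [ub _ _]] pi pj ei ej.
    have hh : has (mem (b :: t)) (x :: s).
      by apply/hasP; exists (inl e.1); [exact: bedges_mem ei | exact: bedges_mem ej].
    have [w [w1 wl wu wp]] := combine hx ux pi ub pj hl hh.
    exists w; split => //; have [p1 p2] := gsc_alt wp; by split.
Qed.
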